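(* Let $U\in\mathbb{R}^{d\times n}$ be a frame, $z\in\mathbb{R}^n_{++}$, $T\subseteq[n]$, and $h:=h^{U,z}_T$. Then for any $1\le\alpha\le\alpha'$, \[\frac{\alpha}{\alpha'}(\alpha'-\alpha)h'(\alpha)\le h(\alpha')-h(\alpha)\le(\alpha'-\alpha)h'(\alpha).\] Equivalently, with the Bregman divergence $D(\beta\mid\alpha):=h'(\alpha)(\beta-\alpha)+h(\alpha)-h(\beta)$, \[0\le D(\alpha'\mid\alpha)\le\Big(\frac{\alpha'}{\alpha}-1\Big)(h(\alpha')-h(\alpha)).\]
   Context: A frame is a full row rank matrix $U\in\mathbb{R}^{d\times n}$; $Z=\mathrm{diag}(z)$; $U_T,Z_T$ restrictions to $T$; $\bar T=[n]\setminus T$. Progress function: $h^{U,z}_T(\alpha):=\mathrm{tr}[\alpha U_TZ_TU_T^{\mathsf T}(U_{\bar T}Z_{\bar T}U_{\bar T}^{\mathsf T}+\alpha U_TZ_TU_T^{\mathsf T})^{-1}]$ for $\alpha>0$. *)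

(* Defs.v *)
From HB Require Import structures.
From mathcomp Require Import all_boot all_order all_algebra.
From mathcomp Require Import all_classical all_reals all_analysis.
Set Implicit Arguments. Unset Strict Implicit. Unset Printing Implicit Defensive.
Import Order.TTheory GRing.Theory Num.Theory.
Local Open Scope ring_scope.

Definition frame (R : realType) (d n : nat) (U : 'M[R]_(d, n)) : Prop :=
  \rank U = d.

(* The vector z restricted to T (entries outside T set to 0), so that
   U *m diag_mx (restr z T) *m U^T = U_T Z_T U_T^T. *)
Definition restr (R : realType) (n : nat) (z : 'rV[R]_n) (T : {set 'I_n}) : 'rV[R]_n :=
  \row_i (if i \in T then z 0 i else 0).

Definition gram (R : realType) (d n : nat) (U : 'M[R]_(d, n)) (z : 'rV[R]_n)
  (T : {set 'I_n}) : 'M[R]_d :=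
  U *m diag_mx (restr z T) *m U^T.

Definition progress (R : realType) (d n : nat) (U : 'M[R]_(d, n)) (z : 'rV[R]_n)
  (T : {set 'I_n}) (a : R) : R :=
  \tr (a *: gram U z T *m invmx (gram U z (~: T) + a *: gram U z T)).

(* Main.v *)
Require Import Defs.
From HB Require Import structures.
From mathcomp Require Import all_boot all_order all_algebra.
From mathcomp Require Import all_classical all_reals all_analysis.
From mathcomp Require Import ring lra.
Import Order.TTheory GRing.Theory Num.Theory.
Import numFieldNormedType.Exports.
Local Open Scope ring_scope.
Local Open Scope classical_set_scope.

Section Alg.
Variables (R : realType) (d n : nat) (W V : 'M[R]_(d,n)).
Hypothesis WV : forall v : 'rV[R]_d, v *m W = 0 -> v *m V = 0 -> v = 0.

Local Notation A := (W *m W^T).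
Local Notation B := (V *m V^T).
Definition NN (b : R) := A + b *: B.
Definition XX (b : R) := invmx (NN b).

Lemma qform_gram m (M : 'M[R]_(d, m)) (v : 'rV[R]_d) :
  (v *m (M *m M^T) *m v^T) 0 0 = \sum_j ((v *m M) 0 j) ^+ 2.
Proof.
rewrite mulmxA -(mulmxA (v *m M)) -trmx_mul !mxE; apply: eq_bigr => j _; rewrite !mxE expr2.
by [].
Qed.

Lemma psd_gram m (M : 'M[R]_(d, m)) (v : 'rV[R]_d) :
  0 <= (v *m (M *m M^T) *m v^T) 0 0.
Proof. by rewrite qform_gram; apply: sumr_ge0 => j _; apply: sqr_ge0. Qed.

Lemma psd_gram0 m (M : 'M[R]_(d, m)) (v : 'rV[R]_d) :
  (v *m (M *m M^T) *m v^T) 0 0 = 0 -> v *m M = 0.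
Proof.
rewrite qform_gram => /eqP; rewrite psumr_eq0 => [/allP H|j _]; last exact: sqr_ge0.
apply/rowP => j; rewrite [RHS]mxE.

by have := H j (mem_index_enum j); rewrite sqrf_eq0 => /eqP.
Qed.

Lemma qformD (v : 'rV[R]_d) (P Q : 'M[R]_d) :
  (v *m (P + Q) *m v^T) 0 0 = (v *m P *m v^T) 0 0 + (v *m Q *m v^T) 0 0.
Proof. by rewrite mulmxDr mulmxDl mxE. Qed.

Lemma qformZ (v : 'rV[R]_d) (b : R) (P : 'M[R]_d) :
  (v *m (b *: P) *m v^T) 0 0 = b * (v *m P *m v^T) 0 0.
Proof. by rewrite -scalemxAr -scalemxAl mxE. Qed.

Lemma psdN b (v : 'rV[R]_d) : 0 <= b -> 0 <= (v *m NN b *m v^T) 0 0.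
Proof.
move=> b0; rewrite /NN qformD qformZ.
by apply: addr_ge0; [apply: psd_gram| apply: mulr_ge0 => //; apply: psd_gram].
Qed.

Lemma NN_unit b : 0 < b -> NN b \in unitmx.
Proof.
move=> b0; rewrite unitmxE unitfE; apply/negP => /det0P [v vn0 vN].
have : (v *m NN b *m v^T) 0 0 = 0 by rewrite vN mul0mx mxE.
rewrite /NN qformD qformZ => /eqP.
rewrite paddr_eq0 ?psd_gram //; last by apply: mulr_ge0; [apply: ltW|apply: psd_gram].
case/andP => /eqP /psd_gram0 H1; rewrite mulf_eq0 (gt_eqF b0) /= => /eqP/psd_gram0 H2.
by move: vn0; rewrite (WV _ H1 H2) eqxx.
Qed.

Lemma NN_sym b : (NN b)^T = NN b.
Proof. by rewrite /NN linearD linearZ /= !trmx_mul !trmxK. Qed.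

Lemma XX_sym b : (XX b)^T = XX b.
Proof. by rewrite /XX trmx_inv NN_sym. Qed.

Lemma XN b : 0 < b -> XX b *m NN b = 1%:M.
Proof. by move=> b0; rewrite mulVmx // NN_unit. Qed.
Lemma NX b : 0 < b -> NN b *m XX b = 1%:M.
Proof. by move=> b0; rewrite mulmxV // NN_unit. Qed.

Lemma Xdiff a b : 0 < a -> 0 < b -> XX a - XX b = (b - a) *: (XX a *m B *m XX b).
Proof.
move=> a0 b0.
have -> : (b - a) *: (XX a *m B *m XX b) = XX a *m (NN b - NN a) *m XX b.
  have e : NN b - NN a = (b - a) *: B by rewrite /NN scalerBl opprD addrACA subrr add0r.
  by rewrite e -scalemxAr -scalemxAl.
by rewrite mulmxBr mulmxBl -mulmxA NX // mulmx1 XN // mul1mx.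
Qed.

Lemma Xcomm a b : 0 < a -> 0 < b -> XX a *m B *m XX b = XX b *m B *m XX a.
Proof.
move=> a0 b0; have [->//|ab] := eqVneq a b.
have := Xdiff a b a0 b0; have := Xdiff b a b0 a0.
move=> e1 e2.
have : (b - a) *: (XX a *m B *m XX b) = (b - a) *: (XX b *m B *m XX a).
  by rewrite -e2 -opprB e1 -scaleNr opprB.
move/(congr1 (fun M => (b - a)^-1 *: M)); rewrite !scalerA mulVf ?scale1r //.
by rewrite subr_eq0 eq_sym.
Qed.

Lemma XA a : 0 < a -> XX a *m A = 1%:M - a *: (XX a *m B).
Proof.
move=> a0; rewrite -(XN a a0) /NN mulmxDr -scalemxAr.
by rewrite addrK.
Qed.

Definition hh (b : R) := \tr (b *: B *m XX b).
Definition gg (a b : R) := \tr (A *m XX a *m B *m XX b).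

Lemma hh_alt b : 0 < b -> hh b = \tr (1%:M : 'M[R]_d) - \tr (A *m XX b).
Proof.
move=> b0; rewrite /hh.
have -> : b *: B = NN b - A by rewrite /NN addrAC subrr add0r.
by rewrite mulmxBl NX // linearB.
Qed.

Lemma hdiff a b : 0 < a -> 0 < b -> hh b - hh a = (b - a) * gg a b.
Proof.
move=> a0 b0; rewrite !hh_alt // opprB addrC addrA subrK -linearB /=.
by rewrite -mulmxBr Xdiff // -scalemxAr mxtraceZ /gg !mulmxA.
Qed.

Lemma tr_LQL m (L : 'M[R]_(d, m)) (Q : 'M[R]_d) :
  (forall v : 'rV[R]_d, 0 <= (v *m Q *m v^T) 0 0) -> 0 <= \tr (L^T *m Q *m L).
Proof.
move=> HQ; rewrite /mxtrace; apply: sumr_ge0 => i _.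
have -> : (L^T *m Q *m L) i i = ((col i L)^T *m Q *m (col i L)^T^T) 0 0.
  rewrite trmxK !mxE; apply: eq_bigr => k _; rewrite !mxE; congr (_ * _).
  by apply: eq_bigr => j _; rewrite !mxE.
exact: HQ.
Qed.

Lemma psdX b (v : 'rV[R]_d) : 0 < b -> 0 <= (v *m XX b *m v^T) 0 0.
Proof.
move=> b0.
have -> : v *m XX b *m v^T = (v *m XX b) *m NN b *m (v *m XX b)^T.
  by rewrite trmx_mul XX_sym mulmxA -(mulmxA (v *m XX b) (NN b)) NX // mulmx1.
by apply: psdN; apply: ltW.
Qed.

Definition kk a b := \tr (A *m XX a *m B *m XX a *m B *m XX b).
Definition mm a b := \tr (A *m XX a *m B *m XX a *m A *m XX b).

Lemma kk_ge0 a b : 0 < a -> 0 < b -> 0 <= kk a b.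
Proof.
move=> a0 b0.
have -> : kk a b = \tr ((B *m XX a *m W)^T *m XX b *m (B *m XX a *m W)).
  rewrite !trmx_mul XX_sym !trmxK.
  have -> : kk a b = \tr (A *m XX a *m B *m (XX b *m B *m XX a)).
    by rewrite /kk -(Xcomm a b a0 b0) !mulmxA.
  have -> : \tr (A *m XX a *m B *m (XX b *m B *m XX a)) =
     \tr (W *m (W^T *m XX a *m B *m XX b *m B *m XX a)) by rewrite !mulmxA.
  by rewrite mxtrace_mulC !mulmxA.
by apply: tr_LQL => v; apply: psdX.
Qed.

Lemma mm_ge0 a b : 0 < a -> 0 < b -> 0 <= mm a b.
Proof.
move=> a0 b0.
have -> : mm a b = \tr ((A *m XX a *m V)^T *m XX b *m (A *m XX a *m V)).
  rewrite !trmx_mul XX_sym !trmxK.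
  have -> : mm a b = \tr ((A *m XX a) *m (B *m XX a *m A *m XX b)).
    by rewrite /mm !mulmxA.
  rewrite mxtrace_mulC.
  have -> : B *m XX a *m A *m XX b *m (A *m XX a) =
     V *m (V^T *m XX a *m A *m XX b *m A *m XX a) by rewrite !mulmxA.
  by rewrite mxtrace_mulC !mulmxA.
by apply: tr_LQL => v; apply: psdX.
Qed.

Lemma gk a b : 0 < a -> 0 < b -> gg a a - gg a b = (b - a) * kk a b.
Proof.
move=> a0 b0; rewrite /gg -linearB /= -mulmxBr Xdiff // -scalemxAr mxtraceZ.
by rewrite /kk !mulmxA.
Qed.

Lemma gm a b : 0 < a -> 0 < b -> mm a b = gg a b - a * kk a b.
Proof.
move=> a0 b0; rewrite /mm /gg /kk.
have -> : A *m XX a *m B *m XX a *m A *m XX b =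
   A *m XX a *m B *m (XX a *m A) *m XX b by rewrite !mulmxA.
rewrite XA // mulmxBr mulmx1 mulmxBl linearB /= -scalemxAr -scalemxAl mxtraceZ.
by rewrite !mulmxA.
Qed.



Lemma ineqs a b : 0 < a -> a <= b ->
  a / b * (b - a) * gg a a <= hh b - hh a /\ hh b - hh a <= (b - a) * gg a a.
Proof.
move=> a0 ab; have b0 : 0 < b by apply: lt_le_trans ab.
rewrite hdiff //.
have ek := gk a b a0 b0; have em := gm a b a0 b0.
have k0 := kk_ge0 a b a0 b0; have m0 := mm_ge0 a b a0 b0.
have d0 : 0 <= b - a by rewrite subr_ge0.
have ga : gg a a = gg a b + (b - a) * kk a b by rewrite -ek addrC subrK.
have gb : gg a b = mm a b + a * kk a b by rewrite em subrK.
rewrite ga; split.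
  rewrite -subr_ge0.
  have -> : (b - a) * gg a b - a / b * (b - a) * (gg a b + (b - a) * kk a b)
     = (b - a) ^+ 2 * mm a b / b.
    rewrite gb; field; exact: lt0r_neq0.
  by apply: divr_ge0; [apply: mulr_ge0 => //; apply: sqr_ge0| apply: ltW].
by rewrite mulrDr lerDl; apply: mulr_ge0 => //; apply: mulr_ge0.
Qed.

Definition Np : 'M[{poly R}]_d := map_mx polyC A + 'X *: map_mx polyC B.

Lemma Np_eval (x : R) : map_mx (horner_eval x) Np = NN x.
Proof.
apply/matrixP => i j; rewrite !mxE /horner_eval /=.
by rewrite !hornerE mulrC.
Qed.

Definition Gf a (x : R) :=
  (\tr (map_mx polyC (A *m XX a *m B) *m \adj Np)).[x] / (\det Np).[x].

Lemma gg_Gf a x : 0 < x -> gg a x = Gf a x.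
Proof.
move=> x0; rewrite /Gf /gg.
have -> : XX x = (\det (NN x))^-1 *: \adj (NN x) by rewrite /XX /invmx NN_unit.
have -> : (\det Np).[x] = \det (NN x).
  by rewrite -Np_eval det_map_mx.
have -> : (\tr (map_mx polyC (A *m XX a *m B) *m \adj Np)).[x] =
   \tr (A *m XX a *m B *m \adj (NN x)).
  rewrite -[LHS]/(horner_eval x _) -trace_map_mx map_mxM map_mx_adj Np_eval.
  congr (\tr (_ *m _)); apply/matrixP => i j; rewrite !mxE /horner_eval /=.
  by rewrite /horner_eval hornerC.
by rewrite -scalemxAr mxtraceZ mulrC.
Qed.

Lemma Gf_cont a x : (\det Np).[x] != 0 -> {for x, continuous (Gf a)}.
Proof.
move=> dx; rewrite /Gf.
apply: cvgM; first exact: continuous_horner.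
by apply: cvgV => //; exact: continuous_horner.
Qed.

Lemma detNp a : 0 < a -> (\det Np).[a] != 0.
Proof.
move=> a0; rewrite -[(\det Np).[a]]/(horner_eval a _) -det_map_mx Np_eval.
by rewrite -unitfE -unitmxE NN_unit.
Qed.


Lemma dq_cvg a : 0 < a ->
  (fun t : R => t^-1 *: ((hh \o shift a) (t *: (1:R)) - hh a)) @ 0^' --> gg a a.
Proof.
move=> a0.
have E : \forall t \near (0:R)^', Gf a (t + a) = t^-1 *: ((hh \o shift a) (t *: (1:R)) - hh a).
  near=> t.
  have t0 : t != 0 by near: t; exact: nbhs_dnbhs_neq.
  have ta : 0 < t + a.
    have : `|t| < a by near: t; exact: dnbhs0_lt.
    rewrite ltr_norml => /andP [h1 _]; rewrite -subr_gt0 in h1.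
    by move: h1; rewrite opprK addrC.
  rewrite /= /shift scaler1 hdiff // addrK -[t * _]/(t *: _) scalerA mulVf // scale1r gg_Gf //.
apply: cvg_trans; first exact: (near_eq_cvg E).
rewrite (gg_Gf a a a0).
have H1 : (fun t : R => t + a) @ (0:R)^' --> a.
  apply: cvg_within_filter.
  have H0 : (fun t : R => t + a) @ (0:R) --> (0 + a : R).
    by apply: cvgD; [exact: cvg_id | exact: cvg_cst].
  by rewrite add0r in H0.
exact: (cvg_comp _ _ H1 (Gf_cont a a (detNp a a0))).
Unshelve. all: by end_near.
Qed.

Lemma hh_deriv a : 0 < a -> derivable hh a 1 /\ derive1 hh a = gg a a.
Proof.
move=> a0; have H := dq_cvg a a0.
split; first by apply/cvg_ex; exists (gg a a).
rewrite derive1E; exact: cvg_lim.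
Qed.

End Alg.

Definition sq (R : realType) (n : nat) (z : 'rV[R]_n) (S : {set 'I_n}) : 'rV[R]_n :=
  \row_i Num.sqrt (restr z S 0 i).
Arguments sq {R n}.

Lemma restr_ge0 (R : realType) (n : nat) (z : 'rV[R]_n) (S : {set 'I_n}) (i : 'I_n) :
  (forall i, 0 < z 0 i) -> 0 <= restr z S 0 i.
Proof. by move=> zp; rewrite /restr mxE; case: ifP => // _; apply: ltW. Qed.

Lemma gramE (R : realType) (d n : nat) (U : 'M[R]_(d, n)) (z : 'rV[R]_n) (S : {set 'I_n}) :
  (forall i, 0 < z 0 i) ->
  gram U z S = (U *m diag_mx (sq z S)) *m (U *m diag_mx (sq z S))^T.
Proof.
move=> zp; rewrite /gram trmx_mul tr_diag_mx -!mulmxA (mulmxA (diag_mx _)) mulmx_diag.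
congr (_ *m (diag_mx _ *m _)); apply/rowP => i; rewrite !mxE -expr2 sqr_sqrtr //.
by case: ifP => // _; apply: ltW.
Qed.

Lemma WV_frame (R : realType) (d n : nat) (U : 'M[R]_(d, n)) (z : 'rV[R]_n) (T : {set 'I_n}) :
  frame U -> (forall i, 0 < z 0 i) ->
  forall v : 'rV[R]_d, v *m (U *m diag_mx (sq z (~: T))) = 0 ->
     v *m (U *m diag_mx (sq z T)) = 0 -> v = 0.
Proof.
move=> fU zp v h1 h2.
have : v *m U = 0.
  apply/rowP => i; rewrite [RHS]mxE.
  have e1 : (v *m (U *m diag_mx (sq z (~: T)))) 0 i = 0 by rewrite h1 mxE.
  have e2 : (v *m (U *m diag_mx (sq z T))) 0 i = 0 by rewrite h2 mxE.
  move: e1 e2; rewrite /= !mulmxA !mul_mx_diag !mxE /restr ?mxE !inE.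
  case: (i \in T) => /=.
    move=> _ /eqP; rewrite mulf_eq0 => /orP [/eqP //|]; rewrite sqrtr_eq0 => zi.
    by move: (zp i); rewrite ltNge zi.
  move=> /eqP; rewrite mulf_eq0 => /orP [/eqP //|]; rewrite sqrtr_eq0 => zi _.
  by move: (zp i); rewrite ltNge zi.
move/eqP; rewrite mulmx_free_eq0; first by move/eqP.
by rewrite /row_free fU.
Qed.

Theorem claim2p18 (R : realType) (d n : nat) (U : 'M[R]_(d, n)) (z : 'rV[R]_n)
  (T : {set 'I_n}) (a a' : R) :
  frame U -> (forall i, 0 < z 0 i) -> 1 <= a -> a <= a' ->
  let h := progress U z T in
  derivable h a 1 /\
  a / a' * (a' - a) * derive1 h a <= h a' - h a /\
  h a' - h a <= (a' - a) * derive1 h a.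
Proof.
move=> fU zp a1 aa' h.
have a0 : 0 < a by apply: lt_le_trans a1; exact: ltr01.
have WV := @WV_frame R d n U z T fU zp.
have E : h = @hh R d n (U *m diag_mx (sq z (~: T))) (U *m diag_mx (sq z T)).
  apply/funext => b; rewrite /h /progress /hh /XX /NN.
  by rewrite (@gramE R d n U z T zp) (@gramE R d n U z (~: T) zp).
rewrite E.
have [D1 D2] := @hh_deriv R d n _ _ WV a a0.
rewrite D2; split => //.
exact: (@ineqs R d n _ _ WV a a' a0 aa').
Qed.
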